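(* Let $\mathcal L$ be a linearly ordered MV-algebra that has a discrete point. If $\mathcal F$ is a prime lattice filter of $\mathcal L$ with $\mathcal K(\mathcal F)=\{1\}$, then $\mathcal F$ is principal, i.e. $\mathcal F=\{x : x\ge p\}$ for some $p\in L$.
   Context: $\mathcal L=(L,\oplus,\lnot,0)$ is an MV-algebra, with $1=\lnot0$ and $x\to y=\lnot x\oplus y$. A discrete point is an element having an immediate successor or an immediate predecessor in the order. A lattice filter is a nonempty upward-closed subset closed under $\wedge$. It is prime if it is proper and $a\vee b\in\mathcal F$ implies $a\in\mathcal F$ or $b\in\mathcal F$. The kernel of $\mathcal F$ is $\mathcal K(\mathcal F)=\{z:\forall a\notin\mathcal F,\ z\to a\notin\mathcal F\}$. *)

(* Defs.v *)
Set Implicit Arguments.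

Record MVAlgebra := {
  mv_car :> Type;
  mv_add : mv_car -> mv_car -> mv_car;
  mv_neg : mv_car -> mv_car;
  mv_zero : mv_car;
  mv_addA : forall x y z, mv_add x (mv_add y z) = mv_add (mv_add x y) z;
  mv_addC : forall x y, mv_add x y = mv_add y x;
  mv_add0 : forall x, mv_add x mv_zero = x;
  mv_negK : forall x, mv_neg (mv_neg x) = x;
  mv_add1 : forall x, mv_add x (mv_neg mv_zero) = mv_neg mv_zero;
  mv_luk : forall x y,
      mv_add (mv_neg (mv_add (mv_neg x) y)) y =
      mv_add (mv_neg (mv_add (mv_neg y) x)) x
}.

Section Ops.
Variable L : MVAlgebra.

Definition mv_one : L := mv_neg L (mv_zero L).
Definition mv_imp (x y : L) : L := mv_add L (mv_neg L x) y.
Definition mv_le (x y : L) : Prop := mv_imp x y = mv_one.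
Definition mv_lt (x y : L) : Prop := mv_le x y /\ x <> y.
Definition mv_join (x y : L) : L :=
  mv_add L (mv_neg L (mv_add L (mv_neg L x) y)) y.
Definition mv_meet (x y : L) : L :=
  mv_neg L (mv_join (mv_neg L x) (mv_neg L y)).

Definition linearly_ordered : Prop := forall x y, mv_le x y \/ mv_le y x.

Definition immediate_successor (a b : L) : Prop :=
  mv_lt a b /\ ~ (exists c, mv_lt a c /\ mv_lt c b).

Definition discrete_point (a : L) : Prop :=
  (exists b, immediate_successor a b) \/ (exists b, immediate_successor b a).

Definition lattice_filter (F : L -> Prop) : Prop :=
  (exists x, F x) /\
  (forall x y, F x -> mv_le x y -> F y) /\
  (forall x y, F x -> F y -> F (mv_meet x y)).

Definition prime_filter (F : L -> Prop) : Prop :=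
  lattice_filter F /\
  (exists x, ~ F x) /\
  (forall a b, F (mv_join a b) -> F a \/ F b).

Definition kernel (F : L -> Prop) (z : L) : Prop :=
  forall a, ~ F a -> ~ F (mv_imp z a).

Definition principal_filter (F : L -> Prop) : Prop :=
  exists p : L, forall x, F x <-> mv_le p x.

End Ops.

(* Main.v *)
Require Import Defs.
From Stdlib Require Import Classical.
Set Implicit Arguments.

Section S.
Variable L : MVAlgebra.
Local Notation "x (+) y" := (mv_add L x y) (at level 50, left associativity).
Local Notation "~~ x" := (mv_neg L x) (at level 35, right associativity).
Local Notation O := (mv_zero L).
Local Notation le := (@mv_le L).
Local Notation lt := (@mv_lt L).

Lemma l_negone : ~~ (mv_one L) = O.
Proof. unfold mv_one. apply mv_negK. Qed.

Lemma l_0add x : O (+) x = x.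
Proof. rewrite mv_addC. apply mv_add0. Qed.

Lemma l_1add x : mv_one L (+) x = mv_one L.
Proof. rewrite mv_addC. unfold mv_one. apply mv_add1. Qed.

Lemma l_compl x : ~~ x (+) x = mv_one L.
Proof.
  pose proof (mv_luk L x (mv_one L)) as H.
  unfold mv_one in *. rewrite mv_add1, mv_negK, l_0add in H. rewrite <- H. reflexivity.
Qed.

Lemma l_J x y : le x y -> ~~ (~~ x (+) y) (+) y = y.
Proof. unfold mv_le, mv_imp. intros H. rewrite H, l_negone. apply l_0add. Qed.

Lemma l_antisym x y : le x y -> le y x -> x = y.
Proof.
  intros H1 H2. pose proof (mv_luk L x y) as H.
  rewrite (l_J H1), (l_J H2) in H. auto.
Qed.

Lemma l_le_add x c : le x (x (+) c).
Proof. unfold mv_le, mv_imp. rewrite mv_addA, l_compl. apply l_1add. Qed.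

Lemma l_decomp u v : le u v -> u (+) ~~ (~~ v (+) u) = v.
Proof.
  intros H. rewrite mv_addC, mv_luk. apply l_J; auto.
Qed.

Lemma l_mono x u v : le u v -> le (x (+) u) (x (+) v).
Proof.
  intros H. rewrite <- (l_decomp H). rewrite mv_addA. apply l_le_add.
Qed.

Lemma l_top x : le x (mv_one L).
Proof. unfold mv_le, mv_imp. apply mv_add1. Qed.

Lemma l_refl x : le x x.
Proof. unfold mv_le, mv_imp. apply l_compl. Qed.

Lemma l_eps_nz a b : lt a b -> ~~ (~~ b (+) a) <> O.
Proof.
  intros [H1 H2] E. apply H2. apply l_antisym; auto.
  unfold mv_le, mv_imp. rewrite <- (mv_negK L (~~ b (+) a)), E. reflexivity.
Qed.

Lemma l_atom a b : @linearly_ordered L -> @immediate_successor L a b ->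
  forall c, c <> O -> le (~~ (~~ b (+) a)) c.
Proof.
  intros Lin [[Hab Hne] Him] c Hc.
  set (e := ~~ (~~ b (+) a)).
  destruct (classic (le e c)) as [|Hn]; auto. exfalso.
  assert (Hce : le c e) by (destruct (Lin e c); tauto).
  assert (Hae : a (+) e = b) by (apply l_decomp; auto).
  assert (Hd1 : le a (a (+) c)) by apply l_le_add.
  assert (Hd2 : le (a (+) c) b) by (rewrite <- Hae; apply l_mono; auto).
  destruct (classic (a (+) c = a)) as [Ea|Na].
  - (* c = 0 *)
    assert (HJ : ~~ (~~ (~~ c) (+) a) (+) a = mv_one L).
    { rewrite mv_negK, (mv_addC L c a), Ea. apply l_compl. }
    rewrite mv_luk in HJ.
    destruct (Lin (~~ c) a) as [H|H].
    + assert (a = mv_one L) by (rewrite mv_luk, (l_J H) in HJ; auto).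
      subst a. apply Hne. apply l_antisym; auto. apply l_top.
    + rewrite (l_J H) in HJ. apply Hc. rewrite <- (mv_negK L c), HJ. apply l_negone.
  - destruct (classic (a (+) c = b)) as [Eb|Nb].
    + apply Hn. unfold e. rewrite <- Eb. unfold mv_le, mv_imp.
      rewrite mv_negK, <- mv_addA, (mv_addC L a c), l_compl. reflexivity.
    + apply Him. exists (a (+) c). split; split; auto.
Qed.

End S.

Theorem mainTheorem12 (L : MVAlgebra) (F : L -> Prop) :
  linearly_ordered L ->
  (exists a : L, @discrete_point L a) ->
  @prime_filter L F ->
  (forall z : L, @kernel L F z <-> z = mv_one L) ->
  @principal_filter L F.
Proof.
  intros Lin [a0 Hd] [[_ [Up _]] _] HK.
  assert (Hab : exists a b, @immediate_successor L a b).
  { destruct Hd as [[b H]|[b H]]; eauto. }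
  destruct Hab as [a [b Hab]].
  set (e := mv_neg L (mv_add L (mv_neg L b) a)).
  assert (He0 : e <> mv_zero L) by (apply (l_eps_nz (proj1 Hab))).
  assert (Hat := l_atom Lin Hab).
  apply NNPP. intros Hnp.
  assert (Hk : @kernel L F (mv_neg L e)).
  { intros x Fx Fex. unfold mv_imp in Fex. rewrite mv_negK in Fex.
    apply Hnp. exists (mv_add L e x).
    apply NNPP. intros Hall. apply Hall. intros y.
    split; intros Hy.
    - destruct (classic (@mv_le L (mv_add L e x) y)) as [|Hn]; auto. exfalso.
      assert (Hyx : ~ @mv_le L y x) by (intro; apply Fx; eapply Up; eauto).
      assert (Hxy : @mv_le L x y) by (destruct (Lin x y); tauto).
      assert (Hnz : mv_neg L (mv_add L (mv_neg L y) x) <> mv_zero L).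
      { intro E. apply Hyx. unfold mv_le, mv_imp.
        rewrite <- (mv_negK L (mv_add L (mv_neg L y) x)), E. reflexivity. }
      apply Hn. rewrite (mv_addC L e x). rewrite <- (l_decomp Hxy).
      apply l_mono. apply Hat. auto.
    - eapply Up; eauto. }
  apply HK in Hk. apply He0. rewrite <- (mv_negK L e), Hk. apply l_negone.
Qed.
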